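(* Let $G$ be a multigraph of even order with $\Delta(G) < \Gamma(G) \le \Delta(G)+1$, and write $\Delta = \Delta(G)$. Let $S \subseteq V(G)$ with $|S|$ odd, $|S|\ge 3$, such that $\langle S\rangle$ is $\Delta$-overfull in $G$ and $\operatorname{sl}(\langle S\rangle, \Delta)$ is minimum among all $\Delta$-overfull induced odd-order subgraphs of $G$. Then $\Delta(G_S) \le \Delta(G)$, $\Gamma(G_S) \le \Delta(G)+1$, $\Delta(G_{S^c}) \le \Delta(G)$, and $\Gamma(G_{S^c}) \le \Delta(G)+1$, where $S^c = V(G)\setminus S$.
   Context: Multigraphs are finite and loopless, multiple edges allowed. For $S \subseteq V(G)$, $\langle S\rangle$ is the induced subgraph. For a multigraph $H$ of odd order $n(H)\ge 3$ with $e(H)$ edges, $t(H) = 2e(H)/(n(H)-1)$; $H$ is $k$-overfull if $t(H)>k$. The $k$-slack is $\operatorname{sl}(H,k) = (k+1)(n(H)-1)/2 - e(H)$. $\Gamma(G) = \max\{t(\langle R\rangle) : R\subseteq V(G), |R| \text{ odd}, |R|\ge 3\}$ (statements about $\Gamma$ of a multigraph with no such $R$ are vacuous). Shrinking: for a nonempty proper subset $S$ of $V(G)$, $G_S$ has vertex set $(V(G)\setminus S)\cup\{s\}$ for a new vertex $s$; its edges are the edges of $G - S$ together with, for each $u \notin S$, exactly as many edges $us$ as there are edges of $G$ joining $u$ to vertices of $S$. *)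

(* Defs.v *)
From mathcomp Require Import all_boot all_order all_algebra.
Set Implicit Arguments. Unset Strict Implicit. Unset Printing Implicit Defensive.
Import Order.TTheory GRing.Theory Num.Theory.

(* A finite loopless multigraph is given by a vertex set W : {set V} inside a
   finite type V and a multiplicity function m : V -> V -> nat
   (m x y = number of edges joining x and y), symmetric and zero on the
   diagonal.  Only the values of m on W matter. *)

Definition is_multigraph (V : finType) (m : V -> V -> nat) : Prop :=
  (forall x y, m x y = m y x) /\ (forall x, m x x = 0%N).

Definition mdeg (V : finType) (m : V -> V -> nat) (W : {set V}) (x : V) : nat :=
  (\sum_(y in W) m x y)%N.

Definition mDelta (V : finType) (m : V -> V -> nat) (W : {set V}) : nat :=
  (\max_(x in W) mdeg m W x)%N.

(* number of edges of the induced subgraph <R> (each unordered pair counted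
   once; exact for symmetric loopless m) *)
Definition medges (V : finType) (m : V -> V -> nat) (R : {set V}) : nat :=
  (\sum_(x in R) \sum_(y in R) m x y)./2.

Definition mt (V : finType) (m : V -> V -> nat) (R : {set V}) : rat :=
  ((2 * medges m R)%N)%:R / ((#|R|.-1)%N)%:R.

Definition odd_sub (V : finType) (W R : {set V}) : bool :=
  [&& R \subset W, odd #|R| & (2 < #|R|)%N].

(* Gamma(G) = max of t(<R>) over odd R, |R| >= 3 (0 if there is none; statements
   about Gamma are then vacuous / trivially true as in the paper) *)
Definition mGamma (V : finType) (m : V -> V -> nat) (W : {set V}) : rat :=
  \big[Num.max/0%R]_(R : {set V} | odd_sub W R) mt m R.

Definition overfull (V : finType) (m : V -> V -> nat) (R : {set V}) (k : nat) : bool :=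
  (k%:R < mt m R)%R.

Definition slack (V : finType) (m : V -> V -> nat) (R : {set V}) (k : nat) : rat :=
  (((k + 1) * #|R|.-1)%N%:R / 2%:R - (medges m R)%:R)%R.

(* Shrinking S to a new vertex s: vertices of G_S are Some u (u in W \ S) and
   None (the new vertex s). *)
Definition shrink_set (V : finType) (W S : {set V}) : {set option V} :=
  None |: (Some @: (W :\: S)).

Definition shrink_adj (V : finType) (m : V -> V -> nat) (S : {set V})
  (a b : option V) : nat :=
  match a, b with
  | Some u, Some v => m u v
  | Some u, None => (\sum_(y in S) m u y)%N
  | None, Some v => (\sum_(y in S) m v y)%N
  | None, None => 0%N
  end.

(* Main.v *)
Require Import Defs.
From mathcomp Require Import all_boot all_order all_algebra.
From mathcomp Require Import zify ring lra.
Import Order.TTheory GRing.Theory Num.Theory.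
Set Implicit Arguments. Unset Strict Implicit. Unset Printing Implicit Defensive.

Section Gen.
Variable (V : finType) (m : V -> V -> nat).

Definition cross (A B : {set V}) := (\sum_(x in A) \sum_(y in B) m x y)%N.

Hypothesis msym : forall x y, m x y = m y x.
Hypothesis mloop : forall x, m x x = 0%N.

Lemma cross_sym A B : cross A B = cross B A.
Proof.
rewrite /cross exchange_big; apply: eq_bigr => x _; apply: eq_bigr => y _.
exact: msym.
Qed.

Lemma cross_splitl A B X : cross A B = (cross (A :&: X) B + cross (A :\: X) B)%N.
Proof. by rewrite /cross (big_setID X). Qed.

Lemma cross_splitr A B X : cross A B = (cross A (B :&: X) + cross A (B :\: X))%N.
Proof. by rewrite /cross -big_split; apply: eq_bigr => x _; rewrite (big_setID X). Qed.

Lemma cross_set1 x : cross [set x] [set x] = 0%N.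
Proof. by rewrite /cross !big_set1. Qed.

Lemma cross_even_n n : forall R : {set V}, #|R| = n -> ~~ odd (cross R R).
Proof.
elim: n => [|n IH] R HR.
  by move/eqP: HR; rewrite cards_eq0 => /eqP ->; rewrite /cross big_set0.
have : (0 < #|R|)%N by rewrite HR.
case/card_gt0P => x Rx.
have Hc : #|R :\ x| = n by move: HR; rewrite (cardsD1 x) Rx /= add1n => -[].
have E0 : (\sum_(y in R) m x y = \sum_(y in R :\ x) m x y)%N.
  by rewrite (big_setD1 x Rx) mloop.
have E1 : (\sum_(i in R :\ x) \sum_(y in R) m i y =
   \sum_(i in R :\ x) m x i + \sum_(i in R :\ x) \sum_(y in R :\ x) m i y)%N.
  rewrite -big_split; apply: eq_bigr => i _; by rewrite (big_setD1 x Rx) msym.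
have -> : cross R R = (\sum_(y in R) m x y + \sum_(i in R :\ x) \sum_(y in R) m i y)%N.
  by rewrite /cross (big_setD1 x Rx).
rewrite E1 E0 addnA addnn oddD odd_double /=.
exact: (IH _ Hc).
Qed.

Lemma cross_even (R : {set V}) : ~~ odd (cross R R).
Proof. exact: (@cross_even_n #|R|). Qed.

Lemma medgesE (R : {set V}) : (2 * medges m R)%N = cross R R.
Proof.
rewrite /medges -/(cross R R) mul2n.
by have := odd_double_half (cross R R); rewrite (negbTE (cross_even R)).
Qed.

Lemma mdegE (W : {set V}) x : mdeg m W x = \sum_(y in W) m x y.
Proof. by []. Qed.

Lemma overfullE (R : {set V}) (k : nat) : (2 <= #|R|)%N ->
  overfull m R k = (k * #|R|.-1 < cross R R)%N.
Proof.
move=> H2; rewrite /overfull /mt medgesE.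
have Hp : (0 < (#|R|.-1)%:R :> rat)%R by rewrite ltr0n; lia.
by rewrite ltr_pdivlMr // -natrM ltr_nat.
Qed.

Lemma mt_leE (R : {set V}) (c : nat) : (2 <= #|R|)%N ->
  (mt m R <= c%:R)%R = (cross R R <= c * #|R|.-1)%N.
Proof.
move=> H2; rewrite /mt medgesE.
have Hp : (0 < (#|R|.-1)%:R :> rat)%R by rewrite ltr0n; lia.
by rewrite ler_pdivrMr // -natrM ler_nat.
Qed.

Lemma slack_leE (S R : {set V}) (k : nat) : (slack m S k <= slack m R k)%R ->
  ((k + 1) * #|S|.-1 + cross R R <= (k + 1) * #|R|.-1 + cross S S)%N.
Proof.
rewrite /slack => H.
have eS : ((medges m S)%:R = (cross S S)%:R / 2 :> rat)%R.
  by rewrite -medgesE natrM; field.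
have eR : ((medges m R)%:R = (cross R R)%:R / 2 :> rat)%R.
  by rewrite -medgesE natrM; field.
rewrite eS eR in H.
rewrite -(ler_nat rat) !natrD; lra.
Qed.

End Gen.

Lemma gamma_le (V : finType) (m : V -> V -> nat) W (c : nat) :
  is_multigraph m ->
  (forall R, odd_sub W R -> (cross m R R <= c * #|R|.-1)%N) ->
  (mGamma m W <= c%:R)%R.
Proof.
move=> [ms ml] H; rewrite /mGamma; apply: (big_ind (fun x => x <= c%:R)%R).
- by rewrite ler0n.
- by move=> x y Hx Hy; rewrite ge_max Hx Hy.
- move=> R HR; have HR' := HR; case/and3P: HR' => _ _ H3.
  rewrite mt_leE //; [exact: H | lia].
Qed.

Lemma le_gamma (V : finType) (m : V -> V -> nat) W R :
  odd_sub W R -> (mt m R <= mGamma m W)%R.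
Proof.
move=> HR; by rewrite /mGamma (bigD1 R) //= le_max lexx.
Qed.

Section Opt.
Variable V : finType.

Definition pre (R : {set option V}) : {set V} := [set x | Some x \in R].

Lemma some_inj : injective (@Some V). Proof. by move=> x y []. Qed.

Lemma opt_setE (R : {set option V}) :
  R = if None \in R then None |: (Some @: pre R) else Some @: pre R.
Proof.
case HN: (None \in R); apply/setP => -[x|].
- by rewrite !inE mem_imset ?inE //; exact: some_inj.
- by rewrite !inE HN.
- by rewrite mem_imset ?inE //; exact: some_inj.
- rewrite HN; apply/esym/negbTE/imsetP => -[y _ //].
Qed.

Lemma none_notin (A : {set V}) : None \notin Some @: A.
Proof. by apply/imsetP => -[y _]. Qed.

Lemma sum_opt (R : {set option V}) (F : option V -> nat) :
  (\sum_(a in R) F a =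
   (if None \in R then F None else 0) + \sum_(x in pre R) F (Some x))%N.
Proof.
rewrite {1}(opt_setE R); case: (None \in R).
  rewrite big_setU1 ?none_notin //= big_imset //; by move=> x y _ _ [].
by rewrite add0n big_imset //; move=> x y _ _ [].
Qed.

Lemma card_opt (R : {set option V}) : #|R| = ((None \in R) + #|pre R|)%N.
Proof.
rewrite {1}(opt_setE R); case: (None \in R).
  by rewrite cardsU1 none_notin card_imset //; exact: some_inj.
by rewrite card_imset //; exact: some_inj.
Qed.

Variable m : V -> V -> nat.
Hypothesis msym : forall x y, m x y = m y x.
Hypothesis mloop : forall x, m x x = 0%N.

Lemma shrink_mg (T : {set V}) : is_multigraph (shrink_adj m T).
Proof. by split=> [[x|] [y|] //=|[x|] //=]. Qed.

Lemma crossS (T : {set V}) (R : {set option V}) :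
  cross (shrink_adj m T) R R =
  (cross m (pre R) (pre R) + (if None \in R then 2 * cross m (pre R) T else 0))%N.
Proof.
rewrite /cross sum_opt.
rewrite (eq_bigr (fun x => (if None \in R then \sum_(z in T) m x z else 0)
     + \sum_(y in pre R) m x y)%N); last first.
  by move=> x _; rewrite sum_opt.
rewrite sum_opt /= big_split /=.
case: (None \in R); last by rewrite big1 // add0n addn0 add0n.
rewrite add0n; lia.
Qed.

Lemma pre_shrink (W T : {set V}) : pre (shrink_set W T) = W :\: T.
Proof.
apply/setP => x; rewrite !inE mem_imset ?inE //; exact: some_inj.
Qed.

Lemma none_shrink (W T : {set V}) : None \in shrink_set W T.
Proof. by rewrite !inE. Qed.

Lemma mdegS_some (W T : {set V}) u : T \subset W ->
  mdeg (shrink_adj m T) (shrink_set W T) (Some u) = mdeg m W u.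
Proof.
move=> TW; rewrite /mdeg sum_opt none_shrink pre_shrink /=.
by rewrite [in RHS](big_setID T) /= (setIidPr TW).
Qed.

Lemma mdegS_none (W T : {set V}) :
  mdeg (shrink_adj m T) (shrink_set W T) None = cross m (W :\: T) T.
Proof. by rewrite /mdeg sum_opt none_shrink pre_shrink. Qed.

End Opt.

Lemma shrink_delta (V : finType) (m : V -> V -> nat) (W T : {set V}) (D : nat) :
  T \subset W -> (forall x, x \in W -> (mdeg m W x <= D)%N) ->
  (cross m (W :\: T) T <= D)%N ->
  (mDelta (shrink_adj m T) (shrink_set W T) <= D)%N.
Proof.
move=> TW Hd Hn; apply/bigmax_leqP => -[u|] Hu.
- rewrite mdegS_some //; apply: Hd.
  move: Hu; rewrite !inE mem_imset; last exact: some_inj.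
  by rewrite inE => /andP[].
- by rewrite mdegS_none.
Qed.

Lemma shrink_gamma (V : finType) (m : V -> V -> nat) (W T : {set V}) (c : nat) :
  is_multigraph m -> T \subset W ->
  (forall R : {set V}, R \subset W :\: T -> odd #|R| -> (2 < #|R|)%N ->
     (cross m R R <= c * #|R|.-1)%N) ->
  (forall R : {set V}, R \subset W :\: T -> ~~ odd #|R| -> (1 < #|R|)%N ->
     (cross m R R + 2 * cross m R T <= c * #|R|)%N) ->
  (mGamma (shrink_adj m T) (shrink_set W T) <= c%:R)%R.
Proof.
move=> [ms ml] TW Hodd Hev; apply: gamma_le; first exact: shrink_mg.
move=> R /and3P[RW Ro R3].
have PW : pre R \subset W :\: T.
  apply/subsetP => x; rewrite /pre inE => Hx.
  by rewrite -(pre_shrink W T) /pre inE (subsetP RW _ Hx).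
rewrite crossS // card_opt; rewrite card_opt in Ro R3.
case: (None \in R) Ro R3 => /= Ro R3.
- rewrite add0n in Ro *; apply: Hev => //; lia.
- by rewrite add0n addn0; apply: Hodd => //; move: Ro R3; rewrite add0n.
Qed.

Theorem lemmaH (V : finType) (m : V -> V -> nat) (W S : {set V}) :
  is_multigraph m ->
  ~~ odd #|W| ->
  ((mDelta m W)%:R < mGamma m W)%R ->
  (mGamma m W <= (mDelta m W + 1)%N%:R)%R ->
  S \subset W -> odd #|S| -> (2 < #|S|)%N ->
  overfull m S (mDelta m W) ->
  (forall R : {set V}, R \subset W -> odd #|R| -> (2 < #|R|)%N ->
     overfull m R (mDelta m W) ->
     (slack m S (mDelta m W) <= slack m R (mDelta m W))%R) ->
  [/\ (mDelta (shrink_adj m S) (shrink_set W S) <= mDelta m W)%N,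
      (mGamma (shrink_adj m S) (shrink_set W S) <= (mDelta m W + 1)%N%:R)%R,
      (mDelta (shrink_adj m (W :\: S)) (shrink_set W (W :\: S)) <= mDelta m W)%N
    & (mGamma (shrink_adj m (W :\: S)) (shrink_set W (W :\: S))
         <= (mDelta m W + 1)%N%:R)%R].
Proof.
move=> Hmg _ _ HGD SW So S3 Hov Hmin.
have Hmg' := Hmg; case: Hmg' => ms ml.
set D := mDelta m W in HGD Hov Hmin *.
have degx : forall x, x \in W -> (mdeg m W x <= D)%N.
  by move=> x Hx; rewrite /D /mDelta; exact: leq_bigmax_cond.
have degsum : forall A : {set V}, A \subset W ->
    (cross m A A + cross m A (W :\: A) <= D * #|A|)%N.
  move=> A AW.
  have E : cross m A W = (cross m A A + cross m A (W :\: A))%N.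
    by rewrite (cross_splitr m A W A) (setIidPr AW).
  rewrite -E /cross.
  rewrite mulnC -sum_nat_const; apply: leq_sum => x Hx.
  exact: degx (subsetP AW _ Hx).
have gam : forall R : {set V}, R \subset W -> odd #|R| -> (2 < #|R|)%N ->
    (cross m R R <= (D + 1) * #|R|.-1)%N.
  move=> R RW Ro R3; rewrite -(mt_leE ms ml); last by lia.
  apply: le_trans HGD; apply: le_gamma; exact/and3P.
rewrite (overfullE ms ml) in Hov; last by lia.
have minR : forall R : {set V}, R \subset W -> odd #|R| -> (2 < #|R|)%N ->
    (D * #|R|.-1 < cross m R R)%N ->
    ((D + 1) * #|S|.-1 + cross m R R <= (D + 1) * #|R|.-1 + cross m S S)%N.
  move=> R RW Ro R3 Rov; apply: (slack_leE ms ml); apply: Hmin => //.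
  by rewrite (overfullE ms ml) //; lia.
have dS := degsum S SW.
have symS : cross m (W :\: S) S = cross m S (W :\: S) by apply: cross_sym.
have WWS : W :\: (W :\: S) = S by rewrite setDDr setDv set0U (setIidPr SW).
have eDs : (D * #|S| = D * #|S|.-1 + D)%N by rewrite -mulnSr prednK //; lia.
have bnd : (cross m S (W :\: S) <= D)%N by lia.
split.
- apply: shrink_delta => //; by rewrite symS.
- apply: shrink_gamma => //.
  + move=> R RWS Ro R3; apply: gam => //; exact: subset_trans RWS (subsetDl W S).
  + move=> R RWS Re R2.
    have RW : R \subset W := subset_trans RWS (subsetDl _ _).
    have RnS : forall x, x \in R -> x \notin S.
      by move=> x /(subsetP RWS); rewrite inE => /andP[].
    have R2S : (R :|: S) :&: S = S by apply/setIidPr; exact: subsetUr.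
    have R2R : (R :|: S) :\: S = R.
      apply/setP => x; rewrite !inE; case Hx: (x \in R); last by case: (x \in S).
      by rewrite (negbTE (RnS _ Hx)).
    have cR2 : cross m (R :|: S) (R :|: S) =
        (cross m R R + cross m S S + 2 * cross m R S)%N.
      rewrite (cross_splitl m (R :|: S) (R :|: S) S) R2S R2R.
      rewrite (cross_splitr m S (R :|: S) S) (cross_splitr m R (R :|: S) S) R2S R2R.
      rewrite (cross_sym ms S R); lia.
    have card2 : #|R :|: S| = (#|R| + #|S|)%N.
      rewrite cardsU; have -> : R :&: S = set0.
        apply/setP => x; rewrite !inE; case Hx: (x \in R) => //.
        by rewrite (negbTE (RnS _ Hx)).
      by rewrite cards0 subn0.
    have R2W : R :|: S \subset W by rewrite subUset RW SW.
    rewrite leqNgt; apply/negP => Hc.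
    have o2 : odd #|R :|: S| by rewrite card2 oddD So (negbTE Re).
    have e1 : (#|R :|: S|.-1 = #|R| + #|S|.-1)%N by rewrite card2; lia.
    have mle : (D * #|R| <= (D + 1) * #|R|)%N by rewrite leq_mul2r leq_addr orbT.
    have ov2 : (D * #|R :|: S|.-1 < cross m (R :|: S) (R :|: S))%N.
      rewrite e1 mulnDr cR2; lia.
    have := minR _ R2W o2 ltac:(lia) ov2; rewrite e1 cR2 mulnDr; lia.
- apply: shrink_delta => //; [exact: subsetDl | by rewrite WWS].
- apply: shrink_gamma => //; first exact: subsetDl; rewrite WWS.
  + move=> R RS Ro R3; apply: gam => //; exact: subset_trans RS SW.
  + move=> R RS Re R2.
    have RW : R \subset W := subset_trans RS SW.
    have ST : S :&: R = R by apply/setIidPr.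
    have cS : cross m S S = (cross m R R + cross m (S :\: R) (S :\: R)
         + 2 * cross m R (S :\: R))%N.
      rewrite (cross_splitl m S S R) ST (cross_splitr m R S R).
      rewrite (cross_splitr m (S :\: R) S R) ST (cross_sym ms (S :\: R) R); lia.
    have WR : cross m R (W :\: R) = (cross m R (S :\: R) + cross m R (W :\: S))%N.
      rewrite (cross_splitr m R (W :\: R) S).
      have -> : (W :\: R) :&: S = S :\: R.
        apply/setP => x; rewrite !inE.
        have h1 : (x \in R) ==> (x \in S) by apply/implyP/(subsetP RS).
        have h2 : (x \in S) ==> (x \in W) by apply/implyP/(subsetP SW).
        by move: h1 h2; case: (x \in R); case: (x \in S); case: (x \in W).
      have -> : (W :\: R) :\: S = W :\: S.
        apply/setP => x; rewrite !inE.
        have h1 : (x \in R) ==> (x \in S) by apply/implyP/(subsetP RS).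
        have h2 : (x \in S) ==> (x \in W) by apply/implyP/(subsetP SW).
        by move: h1 h2; case: (x \in R); case: (x \in S); case: (x \in W).
      by [].
    have cardS : #|S| = (#|R| + #|S :\: R|)%N by rewrite -(cardsID R S) ST.
    have dR := degsum R RW; rewrite WR in dR.
    rewrite leqNgt; apply/negP => Hc.
    have tO : odd #|S :\: R| by move: So; rewrite cardS oddD (negbTE Re).
    have t0 : (0 < #|S :\: R|)%N by move: tO; case: #|_|.
    have e1 : (#|S|.-1 = #|R| + #|S :\: R|.-1)%N by rewrite cardS; lia.
    rewrite e1 mulnDr in Hov.
    have eDr : ((D + 1) * #|R| = D * #|R| + #|R|)%N by rewrite mulnDl mul1n.
    case: (ltnP 2 #|S :\: R|) => Ht.
    * have ovT : (D * #|S :\: R|.-1 < cross m (S :\: R) (S :\: R))%N by lia.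
      have := minR _ (subset_trans (subsetDl S R) SW) tO Ht ovT.
      rewrite e1 !mulnDr; lia.
    * have t1 : #|S :\: R| = 1%N.
        by move: tO Ht t0; case: #|_| => [|[|[|]]].
      have [x Hx] : exists x, S :\: R = [set x] by apply/cards1P/eqP.
      have cT := cross_set1 ml x; rewrite -Hx in cT.
      rewrite t1 /= muln0 addn0 in Hov; lia.
Qed.
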